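(* In the setting described in the context, let $q\in\{1,\dots,n\}$ and assume there exists $A'\subseteq\mathcal C$ with $|A'|=n-q$ and $f(A')=0$. Define $\mu_\wedge:2^{\mathcal C}\to L$ by $\mu_\wedge(\mathcal C)=1$, $\mu_\wedge(X)=f(X)$ if $n-q\le|X|<n$, and $\mu_\wedge(X)=\min_{Y\supsetneq X,\ n-q\le|Y|<n}f(Y)$ if $|X|<n-q$. Then $\mu_\wedge$ is a $q$-minitive capacity on $\mathcal C$.
   Context: Let $\mathcal C=\{1,\dots,n\}$ and let $L$ be either a finite totally ordered set $0=\xi_1<\dots<\xi_l=1$ or $L=[0,1]$. Training data: $N$ pairs $(x^{(k)},\alpha^{(k)})$ with $x^{(k)}\in L^n$, $\alpha^{(k)}\in L$. For $B\subsetneq\mathcal C$, $\gamma_{k,B}=\max_{i\in\mathcal C\setminus B}x^{(k)}_i$ and $f(B)=\max_{1\le k\le N}(\gamma_{k,B}\,\epsilon\,\alpha^{(k)})$ where $a\,\epsilon\,b=b$ if $a<b$ and $a\,\epsilon\,b=0$ if $a\ge b$. A capacity is a map $\mu:2^{\mathcal C}\to L$ with $\mu(\emptyset)=0$, $\mu(\mathcal C)=1$, monotone for inclusion; it is $q$-minitive if for all $X$ with $|X|<n-q$, $\mu(X)=\min_{Y\supsetneq X,\ |Y|\ge n-q}\mu(Y)$. *)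

(* Defs.v *)
From HB Require Import structures.
From mathcomp Require Import all_boot all_order all_algebra.
From mathcomp Require Import reals.
Set Implicit Arguments. Unset Strict Implicit. Unset Printing Implicit Defensive.
Import Order.TTheory GRing.Theory Num.Theory.
Local Open Scope ring_scope.

Section Defs.
Variable R : realType.

(* The scale L: either the whole unit interval [0,1], or a finite
   set of reals in [0,1] containing 0 and 1 (a finite chain 0=xi_1<...<xi_l=1). *)
Definition admissible_scale (L : pred R) : Prop :=
  (forall t, L t = (0 <= t <= 1)) \/
  [/\ exists s : seq R, forall t, L t = (t \in s),
      forall t, L t -> 0 <= t <= 1, L 0 & L 1].

Definition eps (a b : R) : R := if a < b then b else 0.

Definition gammaB (n N : nat) (x : 'I_N -> 'I_n -> R) (k : 'I_N)
  (B : {set 'I_n}) : R := \big[Num.max/0]_(i in ~: B) x k i.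

Definition fB (n N : nat) (x : 'I_N -> 'I_n -> R) (alpha : 'I_N -> R)
  (B : {set 'I_n}) : R :=
  \big[Num.max/0]_(k < N) eps (gammaB x k B) (alpha k).

Definition mu_wedge (n N q : nat) (x : 'I_N -> 'I_n -> R) (alpha : 'I_N -> R)
  (X : {set 'I_n}) : R :=
  if X == setT then 1
  else if (n - q <= #|X|)%N then fB x alpha X
  else \big[Num.min/1]_(Y : {set 'I_n} |
          [&& X \proper Y, (n - q <= #|Y|)%N & (#|Y| < n)%N]) fB x alpha Y.

Definition capacity (n : nat) (L : pred R) (mu : {set 'I_n} -> R) : Prop :=
  [/\ forall X, L (mu X), mu set0 = 0, mu setT = 1 &
      forall X Y : {set 'I_n}, X \subset Y -> mu X <= mu Y].

Definition q_minitive (n q : nat) (mu : {set 'I_n} -> R) : Prop :=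
  forall X : {set 'I_n}, (#|X| < n - q)%N ->
    mu X = \big[Num.min/1]_(Y : {set 'I_n} |
              [&& X \proper Y & (n - q <= #|Y|)%N]) mu Y.
End Defs.

(* Main.v *)
Require Import Defs.
From HB Require Import structures.
From mathcomp Require Import all_boot all_order all_algebra.
From mathcomp Require Import reals.
From mathcomp Require Import zify.
Import Order.TTheory GRing.Theory Num.Theory.
Local Open Scope ring_scope.

Section Aux.
Set Implicit Arguments.
Variable R : realType.
Variables (L : pred R) (n N q : nat) (x : 'I_N -> 'I_n -> R) (alpha : 'I_N -> R).

Lemma scale_facts : admissible_scale L ->
  [/\ L 0, L 1 & forall t, L t -> 0 <= t <= 1].
Proof.
case=> [H|[_ H0 H1 H2]]; last by split.
split; first by rewrite H lexx ler01.
  by rewrite H ler01 lexx.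
by move=> t; rewrite H.
Qed.

Hypothesis HL : admissible_scale L.
Hypothesis Ha : forall k, L (alpha k).

Lemma fB_L (X : {set 'I_n}) : L (fB x alpha X).
Proof.
have [L0 L1 _] := scale_facts HL.
rewrite /fB; apply: (big_ind L) => //.
  by move=> a b La Lb; rewrite /Num.max; case: ifP.
by move=> k _; rewrite /eps; case: ifP.
Qed.

Lemma fB_01 (X : {set 'I_n}) : 0 <= fB x alpha X <= 1.
Proof. by have [_ _ H] := scale_facts HL; apply: H; apply: fB_L. Qed.

Lemma gamma_anti k (X Y : {set 'I_n}) : X \subset Y -> gammaB x k Y <= gammaB x k X.
Proof.
move=> sXY; rewrite /gammaB.
apply: sub_bigmax => i; rewrite !inE; apply: contra => iX.
exact: (subsetP sXY).
Qed.

Lemma fB_mono (X Y : {set 'I_n}) : X \subset Y -> fB x alpha X <= fB x alpha Y.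
Proof.
move=> sXY; rewrite /fB; apply: le_bigmax2 => k _.
have [_ _ H] := scale_facts HL.
have /andP[a0 _] := H _ (Ha k).
have g : gammaB x k Y <= gammaB x k X by apply: gamma_anti.
rewrite /eps; case: ifP => h1; case: ifP => h2 //.
by rewrite (le_lt_trans g h1) in h2.
Qed.

Lemma card_lt_n (Y : {set 'I_n}) : (#|Y| < n)%N = (Y != setT).
Proof.
apply/idP/idP.
  by apply: contraTN => /eqP ->; rewrite cardsT card_ord ltnn.
move=> hY; have : Y \proper setT by rewrite properT.
by move/proper_card; rewrite cardsT card_ord.
Qed.

Lemma mu_le1 (X : {set 'I_n}) : mu_wedge q x alpha X <= 1.
Proof.
rewrite /mu_wedge; case: ifP => _ //; case: ifP => _.
  by have /andP[] := fB_01 X.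
by apply: (big_ind (fun t => t <= 1)) => // [a b ha hb|Y _];
  [rewrite ge_min ha | have /andP[] := fB_01 Y].
Qed.

End Aux.

Theorem proposition2 (R : realType) (L : pred R) (n N q : nat)
  (x : 'I_N -> 'I_n -> R) (alpha : 'I_N -> R) :
  admissible_scale L ->
  (forall k i, L (x k i)) -> (forall k, L (alpha k)) ->
  (1 <= q <= n)%N ->
  (exists A' : {set 'I_n}, #|A'| = (n - q)%N /\ fB x alpha A' = 0) ->
  capacity L (mu_wedge q x alpha) /\ q_minitive q (mu_wedge q x alpha).
Proof.
move=> HL Hx Ha /andP[q1 qn] [A' [cA fA]].
have [L0 L1 L01] := scale_facts HL.
have muT : mu_wedge q x alpha setT = 1 by rewrite /mu_wedge eqxx.
have muX : forall X, X != setT -> (n - q <= #|X|)%N -> mu_wedge q x alpha X = fB x alpha X.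
  by move=> X /negPf h c; rewrite /mu_wedge h c.
have muS : forall X : {set 'I_n}, (#|X| < n - q)%N -> mu_wedge q x alpha X =
   \big[Num.min/1]_(Y : {set 'I_n} |
          [&& X \proper Y, (n - q <= #|Y|)%N & (#|Y| < n)%N]) fB x alpha Y.
  move=> X c; rewrite /mu_wedge.
  have -> : (X == setT) = false.
    apply/negbTE; rewrite -card_lt_n; apply: (leq_trans c); exact: leq_subr.
  by rewrite leqNgt c.
split; first split => //.
- move=> X; rewrite /mu_wedge; case: ifP => _ //; case: ifP => _.
    exact: fB_L.
  apply: (big_ind L) => //; last by move=> Y _; apply: fB_L.
  by move=> a b La Lb; rewrite /Num.min; case: ifP.
- case: (ltnP 0 (n - q)) => h.
    rewrite muS ?cards0 //; apply/eqP; rewrite eq_le; apply/andP; split.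
      apply: (bigmin_inf A') => //; last by rewrite fA.
      rewrite cA leqnn /= proper0 -card_gt0 cA h /=; lia.
    apply/bigmin_geP; split => // Y _; by have /andP[] := fB_01 x alpha HL Ha Y.
  have A0 : A' = set0 by apply/eqP; rewrite -cards_eq0 cA; lia.
  rewrite muX; first by rewrite -A0.
    by rewrite -card_lt_n cards0; lia.
  by rewrite cards0.
- move=> X Y sXY.
  have [->|YT] := eqVneq Y setT; first by rewrite muT; apply: (mu_le1 q x alpha HL Ha).
  have XT : X != setT by apply: contraNneq YT => XT; rewrite -subTset -XT.
  case: (leqP (n - q) #|X|) => cX.
    rewrite muX // muX //; last exact: (leq_trans cX (subset_leq_card sXY)).
    exact: (fB_mono x alpha HL Ha sXY).
  rewrite muS //.
  case: (leqP (n - q) #|Y|) => cY.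
    rewrite muX //; apply: (bigmin_inf Y) => //.
    rewrite cY card_lt_n YT andbT /= properEcard sXY.
    rewrite andbT; lia.
  rewrite muS //; apply: sub_bigmin => Z /and3P[pYZ -> ->].
  by rewrite (sub_proper_trans sXY pYZ).
- move=> X cX.
  rewrite muS //.
  have XT : X \proper setT.
    rewrite properT -card_lt_n; apply: (leq_trans cX); exact: leq_subr.
  have PT : (X \proper setT) && (n - q <= #|[set: 'I_n]|)%N.
    by rewrite XT cardsT card_ord leq_subr.
  rewrite (bigD1 setT PT) /=.
  rewrite muT.
  have -> : \big[Num.min/1]_(Y : {set 'I_n} | ((X \proper Y) && (n - q <= #|Y|)%N) && (Y != setT))
      mu_wedge q x alpha Y =
    \big[Num.min/1]_(Y : {set 'I_n} |
          [&& X \proper Y, (n - q <= #|Y|)%N & (#|Y| < n)%N]) fB x alpha Y.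
    apply: eq_big => [Y|Y /andP[/andP[_ c] h]]; first by rewrite card_lt_n andbA.
    by rewrite muX.
  rewrite /Num.min; case: ifP => // h; exfalso; move: h; apply/negP; rewrite -leNgt.
  apply: (big_ind (fun t => t <= 1)) => // [a b ha hb|Y _].
    by rewrite ge_min ha.
  by have /andP[] := fB_01 x alpha HL Ha Y.
Qed.
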